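(* Let $B:A\to\mathcal U$ be a type family, let $a:A$ be initial in $A$, and let $b:B(a)$ be dependent initial in $B$. Then $(a,b)$ is initial in $\Sigma(x:A,B(x))$.
   Context: Setting: Riehl–Shulman simplicial homotopy type theory (Martin-Löf type theory with $\Sigma$, $\Pi$, identity types, universe $\mathcal U$, function and extension extensionality, directed interval cube $2$, shapes, extension types $\langle(t:\psi)\to A(t)\mid^{\varphi}_{a}\rangle$ of functions on $\psi$ judgmentally restricting to $a$ on $\varphi$). $\Delta^1=\{t:2\}$, $\partial\Delta^1=\{t\equiv0\vee t\equiv1\}$, $\hom_T(x,y):=\langle\Delta^1\to T\mid^{\partial\Delta^1}_{[x,y]}\rangle$. $x$ is initial in $T$ if $\hom_T(x,t)$ is contractible for all $t:T$. For $f:\hom_A(x,y)$, $x':B(x)$, $y':B(y)$: $\mathrm{dhom}^f_B(x',y'):=\langle(t:\Delta^1)\to B(f(t))\mid^{\partial\Delta^1}_{[x',y']}\rangle$; $b:B(a)$ is dependent initial in $B$ if $\mathrm{dhom}^f_B(b,b')$ is contractible for all $a':A$, $f:\hom_A(a,a')$, $b':B(a')$. *)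

(* Defs.v *)
Definition isContr (X : Type) : Type := { c : X & forall x : X, c = x }.

(* hom_T(x,y) := < Δ¹ -> T | ∂Δ¹ -> [x,y] > *)
Definition hom (I : Type) (i0 i1 : I) (T : Type) (x y : T) : Type :=
  { f : I -> T & ((f i0 = x) * (f i1 = y))%type }.

Definition is_initial (I : Type) (i0 i1 : I) (T : Type) (x : T) : Type :=
  forall t : T, isContr (hom I i0 i1 T x t).

(* dhom^f_B(x',y') := < (t:Δ¹) -> B(f t) | ∂Δ¹ -> [x',y'] >, the boundary
   condition being stated over the boundary identifications of f. *)
Definition dhom (I : Type) (i0 i1 : I) (A : Type) (B : A -> Type) (x y : A)
    (f : hom I i0 i1 A x y) (x' : B x) (y' : B y) : Type :=
  { g : forall t : I, B (projT1 f t) &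
    ((eq_rect (projT1 f i0) B (g i0) x (fst (projT2 f)) = x') *
     (eq_rect (projT1 f i1) B (g i1) y (snd (projT2 f)) = y'))%type }.

Definition is_dep_initial (I : Type) (i0 i1 : I) (A : Type) (B : A -> Type)
    (a : A) (b : B a) : Type :=
  forall (a' : A) (f : hom I i0 i1 A a a') (b' : B a'),
    isContr (dhom I i0 i1 A B a a' f b b').

(* Main.v *)
Require Import Defs.
From Stdlib Require Import FunctionalExtensionality.

Lemma contr_sigma {X : Type} {P : X -> Type} :
  isContr X -> (forall x, isContr (P x)) -> isContr {x : X & P x}.
Proof.
  intros [c hc] hP.
  exists (existT P c (projT1 (hP c))).
  intros [x y]. destruct (hc x).
  destruct (hP c) as [c' hc']. simpl. rewrite (hc' y). reflexivity.
Qed.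

Lemma contr_surj {X Y : Type} (r : Y -> X) :
  isContr Y -> (forall x, {y : Y & r y = x}) -> isContr X.
Proof.
  intros [c hc] hs. exists (r c). intros x.
  destruct (hs x) as [y hy]. rewrite <- hy, (hc y). reflexivity.
Qed.

Definition mkp {A : Type} (B : A -> Type) {x x' : A} (p : x = x') (y : B x) (y' : B x')
  (q : eq_rect x B y x' p = y') : existT B x y = existT B x' y'.
Proof. destruct p. simpl in q. destruct q. reflexivity. Defined.

Lemma decomp_gen {A : Type} (B : A -> Type) (u v : sigT B) (e : u = v) :
  match u, v return u = v -> Type with
  | existT _ x y, existT _ x' y' => fun e =>
      {p : x = x' & {q : eq_rect x B y x' p = y' & e = mkp B p y y' q}}
  end e.
Proof. destruct e. destruct u as [x y]. exists eq_refl, eq_refl. reflexivity. Defined.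

Theorem lemma5p1p3 (I : Type) (i0 i1 : I) (A : Type) (B : A -> Type)
    (a : A) (b : B a) :
  is_initial I i0 i1 A a ->
  is_dep_initial I i0 i1 A B a b ->
  is_initial I i0 i1 { x : A & B x } (existT B a b).
Proof.
  intros hA hB [x y].
  set (r := fun (w : {f : hom I i0 i1 A a x & dhom I i0 i1 A B a x f b y}) =>
    match w with
    | existT _ (existT _ phi (p0, p1)) (existT _ gam (q0, q1)) =>
        existT _ (fun t => existT B (phi t) (gam t))
          (mkp B p0 (gam i0) b q0, mkp B p1 (gam i1) y q1)
        : hom I i0 i1 {x : A & B x} (existT B a b) (existT B x y)
    end).
  apply (contr_surj r).
  - apply contr_sigma; [apply hA | intros f; apply hB].
  - assert (Hgen : forall (phi : I -> A) (gam : forall t, B (phi t))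
        (e0 : existT B (phi i0) (gam i0) = existT B a b)
        (e1 : existT B (phi i1) (gam i1) = existT B x y),
        {w : _ & r w = existT (fun f : I -> {x : A & B x} =>
            ((f i0 = existT B a b) * (f i1 = existT B x y))%type)
            (fun t => existT B (phi t) (gam t)) (e0, e1)}).
    { intros phi gam e0 e1.
      destruct (decomp_gen B _ _ e0) as [p0 [q0 E0]].
      destruct (decomp_gen B _ _ e1) as [p1 [q1 E1]].
      exists (existT (fun f : hom I i0 i1 A a x => dhom I i0 i1 A B a x f b y)
        (existT _ phi (p0, p1)) (existT _ gam (q0, q1))).
      simpl. rewrite <- E0, <- E1. reflexivity. }
    intros [F [e0 e1]].
    assert (HF : F = fun t => existT B (projT1 (F t)) (projT2 (F t))).
    { apply functional_extensionality. intros t. destruct (F t); reflexivity. }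
    revert e0 e1. rewrite HF. intros e0 e1.
    exact (Hgen (fun t => projT1 (F t)) (fun t => projT2 (F t)) e0 e1).
Qed.
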